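(* Let $d\ge 3$ be odd. If $w$ is a word over $A\cup A^{-1}$ that represents the identity element of $G_d$, then the exponent sum $|w|_{a_i}$ is $0$ for every $i\in\{1,\dots,d\}$.
   Context: Let $d\ge 3$, $X=\{1,\dots,d\}$, $T$ the $d$-regular rooted tree with vertex set $X^*$. $\mathrm{Aut}(T)$ is the group of root-preserving automorphisms with product left-to-right: $(gh)(u)=h(g(u))$. Sections $g|_u$ are defined by $g(uv)=g(u)\,g|_u(v)$; we write $g=(g|_1,\dots,g|_d)\lambda_g$ with $\lambda_g\in S_d$ the action on the first level; $e$ is the identity; $\overline{j}\in\{1,\dots,d\}$ denotes $j$ mod $d$. $G_d=\langle A\rangle\le\mathrm{Aut}(T)$, $A=\{a_1,\dots,a_d\}$, where $a_i$ acts on the first level as $(i\ \overline{i+1})$, with $a_i|_i=a_i$, $a_i|_{\overline{i+1}}=a_{\overline{i+1}}$, and $a_i|_x=e$ otherwise. For a word $w$ over $A\cup A^{-1}$ and $p\in A$, $|w|_p$ denotes the exponent sum of $p$ in $w$ (number of occurrences of $p$ minus number of occurrences of $p^{-1}$). *)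

(* Defs.v *)
From mathcomp Require Import all_boot all_order all_algebra.
Set Implicit Arguments. Unset Strict Implicit. Unset Printing Implicit Defensive.

(* Letters X = {1,...,d} are encoded as 'I_d = {0,...,d-1} (x+1 <-> x).
   Successor mod d ("\overline{j+1}") is ordS. Vertices of T are seq 'I_d. *)

(* Action of a generator a_i (inv = false) or its inverse a_i^{-1}
   (inv = true) on a vertex, following a_i = (a_i|_1,...,a_i|_d) (i i+1)
   with a_i|_i = a_i, a_i|_{i+1} = a_{i+1}, other sections trivial:
     a_i (i v)     = (i+1) a_i(v),      a_i ((i+1) v) = i a_{i+1}(v),
     a_i^{-1}((i+1) v) = i a_i^{-1}(v), a_i^{-1}(i v) = (i+1) a_{i+1}^{-1}(v). *)
Fixpoint gen_act (d : nat) (inv : bool) (i : 'I_d) (u : seq 'I_d) : seq 'I_d :=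
  match u with
  | [::] => [::]
  | x :: v =>
    if ~~ inv then
      if x == i then ordS i :: gen_act inv i v
      else if x == ordS i then i :: gen_act inv (ordS i) v
      else x :: v
    else
      if x == ordS i then i :: gen_act inv i v
      else if x == i then ordS i :: gen_act inv (ordS i) v
      else x :: v
  end.

(* A word over A ∪ A^{-1}: a letter (i, false) is a_i, (i, true) is a_i^{-1}. *)
Definition word (d : nat) := seq ('I_d * bool).

(* Action of the element of Aut(T) represented by w; products are
   left-to-right, (gh)(u) = h(g(u)), so the first letter acts first. *)
Definition word_act (d : nat) (w : word d) (u : seq 'I_d) : seq 'I_d :=
  foldl (fun u l => gen_act l.2 l.1 u) u w.

Definition represents_identity (d : nat) (w : word d) : Prop :=
  forall u : seq 'I_d, word_act w u = u.

Definition exp_sum (d : nat) (w : word d) (i : 'I_d) : int :=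
  (count (pred1 (i, false)) w)%:Z - (count (pred1 (i, true)) w)%:Z.

(* Main.v *)
Require Import Defs.
From mathcomp Require Import all_boot all_order all_algebra.
From mathcomp Require Import zify ring.
Set Implicit Arguments. Unset Strict Implicit. Unset Printing Implicit Defensive.
Import GRing.Theory.

Lemma val_ordS (d : nat) (i : 'I_d) : nat_of_ord (ordS i) = if i.+1 < d then i.+1 else 0.
Proof.
rewrite /=; have := ltn_ord i; case: (ltnP i.+1 d) => h1 h2; first by rewrite modn_small.
have -> : i.+1 = d by lia. by rewrite modnn.
Qed.

Lemma ordS_neq (d : nat) (hd : 3 <= d) (i : 'I_d) : (ordS i == i) = false.
Proof.
apply/negbTE/eqP => /(congr1 (@nat_of_ord _)); rewrite val_ordS. have := ltn_ord i.
case: ifP => h; move=> H1 H2. all: lia.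
Qed.

Lemma ordSS_neq (d : nat) (hd : 3 <= d) (i : 'I_d) : (ordS (ordS i) == i) = false.
Proof.
apply/negbTE/eqP => /(congr1 (@nat_of_ord _)). have := ltn_ord i.
move: (val_ordS i) (val_ordS (ordS i)).
case: ifP => h; case: ifP => h'; move=> H1 H2 H3 H4; lia.
Qed.

Definition step (d : nat) (l : 'I_d * bool) (x : 'I_d) : 'I_d * option ('I_d * bool) :=
  let (i, b) := l in
  if ~~ b then
    (if x == i then (ordS i, Some (i, false))
     else if x == ordS i then (i, Some (ordS i, false)) else (x, None))
  else
    (if x == ordS i then (i, Some (i, true))
     else if x == i then (ordS i, Some (ordS i, true)) else (x, None)).

Definition oseq (T : Type) (o : option T) : seq T := if o is Some l then [:: l] else [::].

Fixpoint track (d : nat) (w : word d) (x : 'I_d) : 'I_d :=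
  if w is l :: w' then track w' (step l x).1 else x.

Fixpoint sec (d : nat) (w : word d) (x : 'I_d) : word d :=
  if w is l :: w' then oseq (step l x).2 ++ sec w' (step l x).1 else [::].

Lemma gen_cons (d : nat) (l : 'I_d * bool) x v :
  gen_act l.2 l.1 (x :: v) =
  (step l x).1 :: (if (step l x).2 is Some l' then gen_act l'.2 l'.1 v else v).
Proof. by case: l => i [] /=; repeat case: ifP. Qed.

Lemma word_act_cons (d : nat) (l : 'I_d * bool) (w : word d) u :
  word_act (l :: w) u = word_act w (gen_act l.2 l.1 u).
Proof. by []. Qed.

Lemma word_act_cat (d : nat) (w1 w2 : word d) u :
  word_act (w1 ++ w2) u = word_act w2 (word_act w1 u).
Proof. by rewrite /word_act foldl_cat. Qed.

Lemma act_cons (d : nat) (w : word d) x v :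
  word_act w (x :: v) = track w x :: word_act (sec w x) v.
Proof.
elim: w x v => [|l w IH] x v //.
rewrite word_act_cons gen_cons IH word_act_cat.
by case: (step l x).2.
Qed.

Lemma sec_id (d : nat) (w : word d) x :
  represents_identity w -> represents_identity (sec w x) /\ track w x = x.
Proof.
move=> h; split; last by have := h [:: x]; rewrite act_cons => -[].
by move=> v; have := h (x :: v); rewrite act_cons => -[].
Qed.

Lemma genK1 (d : nat) (hd : 3 <= d) (i : 'I_d) u : gen_act false i (gen_act true i u) = u.
Proof.
elim: u i => [|x v IH] i //=.
case: (eqVneq x (ordS i)) => [->|h1] /=; first by rewrite eqxx IH.
case: (eqVneq x i) => [->|h2] /=; first by rewrite ordS_neq // eqxx IH.
by rewrite (negbTE h1) (negbTE h2).
Qed.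

Lemma genK2 (d : nat) (hd : 3 <= d) (i : 'I_d) u : gen_act true i (gen_act false i u) = u.
Proof.
elim: u i => [|x v IH] i //=.
case: (eqVneq x i) => [->|h2] /=; first by rewrite eqxx IH.
case: (eqVneq x (ordS i)) => [->|h1] /=; first by rewrite eq_sym ordS_neq // eqxx IH.
by rewrite (negbTE h1) (negbTE h2).
Qed.

Lemma genK (d : nat) (hd : 3 <= d) (i : 'I_d) b u : gen_act b i (gen_act (~~ b) i u) = u.
Proof. by case: b; [apply: genK2 | apply: genK1]. Qed.

Definition invw (d : nat) (w : word d) : word d := rev (map (fun l => (l.1, ~~ l.2)) w).

Lemma invwK (d : nat) (hd : 3 <= d) (w : word d) u : word_act w (word_act (invw w) u) = u.
Proof.
elim: w u => [|l w IH] u //=.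
rewrite /invw /= rev_cons -cats1 -/(invw w) word_act_cat word_act_cons /=.
by rewrite genK.
Qed.

Lemma rot_id (d : nat) (hd : 3 <= d) (u v : word d) :
  represents_identity (u ++ v) -> represents_identity (v ++ u).
Proof.
move=> h y; rewrite word_act_cat.
have := h (word_act (invw u) y); rewrite word_act_cat invwK // => e.
by rewrite e invwK.
Qed.

Lemma es_cat (d : nat) (a b : word d) k : exp_sum (a ++ b) k = (exp_sum a k + exp_sum b k)%R.
Proof. rewrite /exp_sum !count_cat !PoszD. lia. Qed.

Lemma es_cons (d : nat) (l : 'I_d * bool) w k : exp_sum (l :: w) k = (exp_sum [:: l] k + exp_sum w k)%R.
Proof. exact: (es_cat [:: l] w k). Qed.

Lemma es_nil (d : nat) k : exp_sum ([::] : word d) k = 0%R.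
Proof. by []. Qed.

Lemma step_inv (d : nat) (hd : 3 <= d) (l : 'I_d * bool) x : (step l (step l x).1).1 = x.
Proof.
case: l => i [] /=.
- case: (eqVneq x (ordS i)) => [->|h1] /=; first by rewrite eq_sym ordS_neq // eqxx.
  case: (eqVneq x i) => [->|h2] /=; first by rewrite eqxx.
  by rewrite (negbTE h1) (negbTE h2).
- case: (eqVneq x i) => [->|h2] /=; first by rewrite ordS_neq // eqxx.
  case: (eqVneq x (ordS i)) => [->|h1] /=; first by rewrite eqxx.
  by rewrite (negbTE h1) (negbTE h2).
Qed.

Lemma step_inj (d : nat) (hd : 3 <= d) (l : 'I_d * bool) : injective (fun x => (step l x).1).
Proof. apply: (@can_inj _ _ _ (fun x => (step l x).1)) => x; exact: step_inv. Qed.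

Lemma reidx_i (d : nat) (hd : 3 <= d) (l : 'I_d * bool) (F : 'I_d -> int) :
  (\sum_(x : 'I_d) F (step l x).1 = \sum_(x : 'I_d) F x)%R.
Proof.
rewrite (reindex_inj (@step_inj _ hd l)) /=.
by apply: eq_bigr => x _; rewrite step_inv.
Qed.

Lemma reidx_n (d : nat) (hd : 3 <= d) (l : 'I_d * bool) (F : 'I_d -> nat) :
  \sum_(x : 'I_d) F (step l x).1 = \sum_(x : 'I_d) F x.
Proof.
rewrite (reindex_inj (@step_inj _ hd l)) /=.
by apply: eq_bigr => x _; rewrite step_inv.
Qed.

Lemma sum2i (d : nat) (i j : 'I_d) (A B : int) : i != j ->
  (\sum_(x : 'I_d) (if x == i then A else if x == j then B else 0%R) = A + B)%R.
Proof.
move=> hij; rewrite (bigD1 i) //= eqxx (bigD1 j) /=; last by rewrite eq_sym.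
rewrite (negbTE (negbT (introF eqP _))); last by move=> e; rewrite e eqxx in hij.
rewrite eqxx big1 ?addr0 // => x /andP [h1 h2]; by rewrite (negbTE h1) (negbTE h2).
Qed.

Lemma sum2n (d : nat) (i j : 'I_d) (A B : nat) : i != j ->
  \sum_(x : 'I_d) (if x == i then A else if x == j then B else 0) = A + B.
Proof.
move=> hij; rewrite (bigD1 i) //= eqxx (bigD1 j) /=; last by rewrite eq_sym.
rewrite (negbTE (negbT (introF eqP _))); last by move=> e; rewrite e eqxx in hij.
rewrite eqxx big1 ?addn0 // => x /andP [h1 h2]; by rewrite (negbTE h1) (negbTE h2).
Qed.

Lemma es1 (d : nat) (a k : 'I_d) c :
  exp_sum [:: (a, c)] k = if a == k then (if c then (-1)%R else 1%R) else 0%R.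
Proof.
rewrite /exp_sum /=. case: (eqVneq a k) => [->|h]; case: c; rewrite /= ?eqxx //=.
all: try by rewrite !xpair_eqE (negbTE h).
all: by rewrite !xpair_eqE eqxx.
Qed.

Lemma sum_step_es (d : nat) (hd : 3 <= d) (l : 'I_d * bool) k :
  (\sum_(x : 'I_d) exp_sum (oseq (step l x).2) (ordS k) =
   exp_sum [:: l] (ordS k) + exp_sum [:: l] k)%R.
Proof.
case: l => i [].
- rewrite (eq_bigr (fun x => if x == ordS i then exp_sum [:: (i, true)] (ordS k)
     else if x == i then exp_sum [:: (ordS i, true)] (ordS k) else 0%R)); last first.
    by move=> x _ /=; repeat case: ifP.
  rewrite sum2i ?ordS_neq // !es1 (inj_eq (@ordS_inj _)) //.
- rewrite (eq_bigr (fun x => if x == i then exp_sum [:: (i, false)] (ordS k)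
     else if x == ordS i then exp_sum [:: (ordS i, false)] (ordS k) else 0%R)); last first.
    by move=> x _ /=; repeat case: ifP.
  rewrite sum2i ?(eq_sym i) ?ordS_neq // !es1 (inj_eq (@ordS_inj _)) //.
Qed.

Lemma sum_sec_es (d : nat) (hd : 3 <= d) (w : word d) k :
  (\sum_(x : 'I_d) exp_sum (sec w x) (ordS k) = exp_sum w (ordS k) + exp_sum w k)%R.
Proof.
elim: w => [|l w IH] /=.
  by rewrite big1 // => x _; rewrite es_nil.
rewrite (eq_bigr (fun x => exp_sum (oseq (step l x).2) (ordS k) + exp_sum (sec w (step l x).1) (ordS k))%R);
  last by move=> x _; rewrite es_cat.
rewrite big_split /= sum_step_es //.
have -> : (\sum_(x : 'I_d) exp_sum (sec w (step l x).1) (ordS k) = \sum_(x : 'I_d) exp_sum (sec w x) (ordS k))%R.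
  by rewrite (reidx_i hd l (fun x => exp_sum (sec w x) (ordS k))).
rewrite IH (es_cons l w (ordS k)) (es_cons l w k). lia.
Qed.

Lemma sum_step_size (d : nat) (hd : 3 <= d) (l : 'I_d * bool) :
  \sum_(x : 'I_d) size (oseq (step l x).2) = 2.
Proof.
case: l => i [].
- rewrite (eq_bigr (fun x => if x == ordS i then 1 else if x == i then 1 else 0)); last first.
    by move=> x _ /=; repeat case: ifP.
  by rewrite sum2n ?ordS_neq.
- rewrite (eq_bigr (fun x => if x == i then 1 else if x == ordS i then 1 else 0)); last first.
    by move=> x _ /=; repeat case: ifP.
  by rewrite sum2n // eq_sym ordS_neq.
Qed.

Lemma sum_sec_size (d : nat) (hd : 3 <= d) (w : word d) :
  \sum_(x : 'I_d) size (sec w x) = 2 * size w.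
Proof.
elim: w => [|l w IH] /=; first by rewrite big1.
rewrite (eq_bigr (fun x => size (oseq (step l x).2) + size (sec w (step l x).1)));
  last by move=> x _; rewrite size_cat.
rewrite big_split /= sum_step_size //.
have -> : \sum_(x : 'I_d) size (sec w (step l x).1) = \sum_(x : 'I_d) size (sec w x).
  by rewrite (reidx_n hd l (fun x => size (sec w x))).
rewrite IH. lia.
Qed.

Lemma Minj (d : nat) (hodd : odd d) (e : 'I_d -> int) :
  (forall j, e (ordS j) + e j = 0)%R -> forall j, e j = 0%R.
Proof.
move=> H j.
have Hit : forall n, e (iter n (@ordS d) j) = ((-1) ^+ n * e j)%R.
  elim=> [|n IHn]; first by rewrite /= expr0 mul1r.
  rewrite iterS. have := H (iter n (@ordS d) j). rewrite IHn exprS => h.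
  have -> : e (ordS (iter n (@ordS d) j)) = (- ((-1) ^+ n * e j))%R by lia.
  by rewrite mulN1r mulNr.
have Hv : forall n, nat_of_ord (iter n (@ordS d) j) = (j + n) %% d.
  elim=> [|n IHn]; first by rewrite /= addn0 modn_small.
  by rewrite iterS /= IHn addnS -[(j + n).+1]addn1 -(addn1 ((j + n) %% d)) modnDml.
have Ed : iter d (@ordS d) j = j by apply: val_inj; rewrite /= Hv modnDr modn_small.
have := Hit d; rewrite Ed -signr_odd hodd expr1 mulN1r. lia.
Qed.

Lemma sec_size (d : nat) (w : word d) x : size (sec w x) <= size w.
Proof.
elim: w x => [|l w IH] x //=; rewrite size_cat.
by case: (step l x).2 => [l'|] /=; [rewrite ltnS IH | apply: leqW; apply: IH].
Qed.

Lemma full_cons (d : nat) (l : 'I_d * bool) (w : word d) x :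
  size (sec (l :: w) x) = size (l :: w) ->
  exists l', (step l x).2 = Some l' /\ size (sec w (step l x).1) = size w.
Proof.
rewrite /= size_cat; case: (step l x).2 => [l'|] /=.
  by move=> [h]; exists l'.
by have := sec_size w (step l x).1; lia.
Qed.

Lemma step_some (d : nat) (i : 'I_d) b x l' :
  (step (i, b) x).2 = Some l' ->
  [/\ l'.2 = b, (if b then l'.1 = (step (i, b) x).1 else l'.1 = x) & (x == i) || (x == ordS i)].
Proof.
case: b => /=; repeat case: ifP => [/eqP ?|?]; subst => //=.
all: first [by move=> [<-]; rewrite /= ?eqxx ?orbT | by move=> H; discriminate H | idtac].
Qed.

Fixpoint hasNP (d : nat) (w : word d) : bool :=
  if w is l1 :: w' then (if w' is l2 :: _ then l1.2 && ~~ l2.2 else false) || hasNP w' else false.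

Fixpoint hasC (d : nat) (w : word d) : bool :=
  if w is l1 :: w' then
    (if w' is l2 :: _ then [&& l1.2, ~~ l2.2 & l1.1 == l2.1] else false) || hasC w'
  else false.

Lemma fullNP (d : nat) (w : word d) x :
  size (sec w x) = size w -> hasNP w -> hasC (sec w x).
Proof.
elim: w x => [|l1 w IH] x // hf.
have [l1' [e1 hf']] := full_cons hf.
have -> : sec (l1 :: w) x = l1' :: sec w (step l1 x).1 by rewrite /= e1.
move=> /= /orP [|/(IH _ hf') h]; last first.
  by rewrite /= h orbT.
clear hf; case: w IH hf' => [|l2 w] // IH hf' /andP [n1 p2].
have [l2' [e2 hf'']] := full_cons hf'.
have -> : sec (l2 :: w) (step l1 x).1 = l2' :: sec w (step l2 (step l1 x).1).1 by rewrite /= e2.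
suff: [&& l1'.2, ~~ l2'.2 & l1'.1 == l2'.1] by move=> h; rewrite /= h.
clear -e1 e2 n1 p2.
move: e1 e2 n1 p2; case: l1 => i1 b1; case: l2 => i2 b2 => e1 e2 n1 p2.
rewrite /= in n1 p2; rewrite n1 in e1; rewrite (negbTE p2) in e2.
move: e1 e2 => /step_some [h1 h2 _] /step_some [h3 h4 _].
by rewrite /= h1 h3 h2 h4 n1 eqxx.
Qed.

Lemma hasC_split (d : nat) (w : word d) :
  hasC w -> exists w1 w2 a, w = w1 ++ [:: (a, true); (a, false)] ++ w2.
Proof.
elim: w => [|l1 w IH] //= /orP [|/IH [w1 [w2 [a ->]]]]; last first.
  by exists (l1 :: w1), w2, a.
case: w IH => [|l2 w] // _ /and3P [h1 h2 /eqP h3].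
exists [::], w, l1.1 => /=. move: h1 h2 h3; case: l1 => i1 b1; case: l2 => i2 b2 /= -> /negbTE -> ->.
done.
Qed.

Lemma cancel_pair (d : nat) (hd : 3 <= d) (w1 w2 : word d) a :
  let w := w1 ++ [:: (a, true); (a, false)] ++ w2 in
  [/\ forall u, word_act w u = word_act (w1 ++ w2) u,
      forall k, exp_sum w k = exp_sum (w1 ++ w2) k
    & size (w1 ++ w2) < size w].
Proof.
split.
- move=> u; rewrite !word_act_cat. congr (word_act w2).
  by rewrite /word_act /= (genK hd a false).
- move=> k; rewrite !es_cat (es_cons _ [:: _]) !es1. case: (a == k) => /=; lia.
- by rewrite !size_cat /=; lia.
Qed.

Definition IHP (d : nat) (m : nat) :=
  forall u : word d, size u < m -> represents_identity u -> forall j, exp_sum u j = 0%R.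

Lemma caseNP (d : nat) (hd : 3 <= d) (hodd : odd d) m (IH : IHP d m) (w : word d) :
  size w <= m -> represents_identity w -> hasNP w -> forall j, exp_sum w j = 0%R.
Proof.
move=> hs hid hnp; apply: (Minj hodd) => j.
rewrite -sum_sec_es //; apply: big1 => x _.
have [hidx _] := sec_id x hid.
case: (ltnP (size (sec w x)) (size w)) => hl.
  by apply: IH => //; apply: leq_trans hl hs.
have hf : size (sec w x) = size w by apply/eqP; rewrite eqn_leq sec_size hl.
have [w1 [w2 [a E]]] := hasC_split (fullNP hf hnp).
have [A B C] := cancel_pair hd w1 w2 a.
rewrite E B; apply: IH.
  by move: C; rewrite -E hf => C; apply: leq_trans C hs.
by move=> u; rewrite -A -E; apply: hidx.
Qed.

Lemma sec_sign (d : nat) (w : word d) x b :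
  all (fun l => l.2 == b) w -> all (fun l => l.2 == b) (sec w x).
Proof.
elim: w x => [|l w IH] x //= /andP [hl hw]; rewrite all_cat IH // andbT.
case e: (step l x).2 => [l'|] //=; rewrite andbT.
by move: e hl; case: l => i c /step_some [-> _ _].
Qed.

Lemma count_sign0 (d : nat) (u : word d) b k :
  all (fun l => l.2 == b) u -> count (pred1 (k, ~~ b)) u = 0.
Proof.
elim: u => [|l u IH] //= /andP [/eqP hl hu]; rewrite IH // addn0; clear IH hu.
by case: l hl => i c /= ->; rewrite xpair_eqE; case: b; rewrite /= ?andbF.
Qed.

Lemma ss_nonzero (d : nat) (u : word d) b :
  all (fun l => l.2 == b) u -> u != [::] -> exists j, exp_sum u j != 0%R.
Proof.
case: u => [|[k c] u] // h _; exists k.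
have hc : c = b by move: h => /= /andP [/eqP -> _].
rewrite /exp_sum.
have h0 := count_sign0 k h.
have h1 : 0 < count (pred1 (k, b)) ((k, c) :: u) by rewrite /= hc eqxx.
case: b h0 h1 {h hc} => /= h0 h1; rewrite h0 //; lia.
Qed.

Lemma idx_eq (d : nat) (hd : 3 <= d) (i k x y : 'I_d) :
  (x == i) && (y == ordS i) || (x == ordS i) && (y == i) ->
  (x == k) || (x == ordS k) -> (y == k) || (y == ordS k) -> k = i.
Proof.
have S1 := @ordS_neq d hd; have S2 := @ordSS_neq d hd.
case/orP => /andP [/eqP -> /eqP ->] /orP [/eqP h1|/eqP h1] /orP [/eqP h2|/eqP h2] //.
- by move: (S2 k); rewrite -h1 h2 eqxx.
- by move/ordS_inj: h2 ->.
- by move: (S2 k); rewrite -h2 h1 eqxx.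
- by move/ordS_inj: h1 ->.
Qed.

Lemma step_pos1 (d : nat) (hd : 3 <= d) (i : 'I_d) c : (step (i, c) i).1 = ordS i.
Proof. by case: c => /=; rewrite ?eqxx // eq_sym ordS_neq // eqxx. Qed.

Lemma step_pos2 (d : nat) (hd : 3 <= d) (i : 'I_d) c : (step (i, c) (ordS i)).1 = i.
Proof. by case: c => /=; rewrite ?eqxx // ordS_neq // eqxx. Qed.

Lemma const_idx (d : nat) (hd : 3 <= d) (w : word d) i x y :
  (x == i) && (y == ordS i) || (x == ordS i) && (y == i) ->
  size (sec w x) = size w -> size (sec w y) = size w -> all (fun l => l.1 == i) w.
Proof.
elim: w x y => [|[k c] w IH] x y // hxy hx hy.
have [lx [ex hx']] := full_cons hx.
have [ly [ey hy']] := full_cons hy.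
have [_ _ mx] := step_some ex. have [_ _ my] := step_some ey.
have ki := idx_eq hd hxy mx my. subst k.
rewrite /= eqxx /=.
case/orP: hxy => /andP [/eqP hx1 /eqP hy1]; subst x y.
- apply: (IH _ _ _ hx' hy'). by rewrite (step_pos1 hd) (step_pos2 hd) !eqxx /= ?orbT.
- apply: (IH _ _ _ hx' hy'). by rewrite (step_pos1 hd) (step_pos2 hd) !eqxx /= ?orbT.
Qed.

Lemma ss_const (d : nat) (hd : 3 <= d) m (IH : IHP d m) (w : word d) b i c w' :
  w = (i, c) :: w' -> size w <= m -> represents_identity w -> all (fun l => l.2 == b) w ->
  all (fun l => l.1 == i) w /\ size (sec w i) = size w.
Proof.
move=> Ew hs hid hsg.
have Hsmall : forall x, size (sec w x) < size w -> size (sec w x) = 0.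
  move=> x hl; have [hidx _] := sec_id x hid.
  have h0 := IH _ (leq_trans hl hs) hidx.
  case: (eqVneq (sec w x) [::]) => [->|hne] //.
  have [j hj] := ss_nonzero (sec_sign x hsg) hne.
  by rewrite h0 eqxx in hj.
have Hother : forall x, x != i -> x != ordS i -> size (sec w x) < size w.
  move=> x h1 h2; rewrite Ew /= size_cat.
  have -> : (step (i, c) x).2 = None by clear Ew; case: c => /=; rewrite (negbTE h1) (negbTE h2).
  by rewrite /= ltnS sec_size.
have Hsum := sum_sec_size hd w.
rewrite (bigD1 i) // (bigD1 (ordS i)) /= in Hsum; last by rewrite ordS_neq.
rewrite big1 in Hsum; last first.
  by move=> x /andP [h1 h2]; apply: Hsmall; apply: Hother.
have Si := sec_size w i. have SS := sec_size w (ordS i).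
have Ei : size (sec w i) = size w by lia.
have ES : size (sec w (ordS i)) = size w by lia.
split => //; apply: (const_idx hd (x := i) (y := ordS i)) => //.
by rewrite !eqxx.
Qed.

Lemma sec_first2 (d : nat) (hd : 3 <= d) c (w'' : word d) i :
  exists l1 l2 u', sec [:: (i, c), (i, c) & w''] i = l1 :: l2 :: u' /\ l1.1 != l2.1.
Proof.
case: c => /=.
- rewrite eq_sym ordS_neq // eqxx /= ordS_neq // eqxx /=.
  by eexists _, _, _; split; first reflexivity; rewrite /= ordS_neq.
- rewrite eqxx /= ordS_neq // eqxx /=.
  by eexists _, _, _; split; first reflexivity; rewrite /= eq_sym ordS_neq.
Qed.

Lemma ss_false (d : nat) (hd : 3 <= d) m (IH : IHP d m) (w : word d) b :
  size w <= m -> represents_identity w -> all (fun l => l.2 == b) w -> w != [::] -> False.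
Proof.
case: w => [|[i c] w'] // hs hid hsg _.
have [hall hfull] := ss_const hd IH (erefl _) hs hid hsg.
have [hidi htr] := sec_id i hid.
case: w' hs hid hsg hall hfull hidi htr => [|[i2 c2] w''] hs hid hsg hall hfull hidi htr.
  by move: htr; rewrite /= (step_pos1 hd) => /eqP; rewrite ordS_neq.
move: hall => /= /and3P [_ /eqP e2 _]; subst i2.
have hc : c2 = c.
  by move: hsg => /= /and3P [/eqP -> /eqP -> _].
subst c2.
have hsg' := sec_sign i hsg.
have Eu := sec_first2 hd c w'' i.
have [l1 [l2 [u' [Eu' hne]]]] := Eu.
move: hsg' hidi hfull; rewrite Eu' => hsg' hidi hfull.
case: l1 Eu' hne hsg' hidi hfull => i1 b1 Eu' hne hsg' hidi hfull.
have [hall' _] := ss_const hd IH (erefl _) (leq_trans (eq_leq hfull) hs) hidi hsg'.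
move: hall' => /= /and3P [_ /eqP h _]. by rewrite h eqxx in hne.
Qed.

Lemma split_noNP (d : nat) (w : word d) :
  ~~ hasNP w -> exists P N, [/\ w = P ++ N, all (fun l => l.2 == false) P & all (fun l => l.2 == true) N].
Proof.
elim: w => [|l w IH] /=; first by move=> _; exists [::], [::].
rewrite negb_or => /andP [h1 /IH [P [N [E hP hN]]]].
clear IH; case hl: l.2.
- exists [::], (l :: w); split => //=. rewrite hl /=.
  case: P E hP h1 => [|p P] E hP h1; first by rewrite E.
  by move: h1; rewrite E /= hl /=; move: hP => /= /andP [/eqP -> _].
- by exists (l :: P), N; split; rewrite /= ?E ?hl.
Qed.

Lemma hasNP_cons (d : nat) (l : 'I_d * bool) (s : word d) :
  hasNP (l :: s) = (if s is l2 :: _ then l.2 && ~~ l2.2 else false) || hasNP s.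
Proof. by []. Qed.

Lemma hasNP_cat (d : nat) (N P : word d) :
  N != [::] -> P != [::] -> all (fun l => l.2 == true) N -> all (fun l => l.2 == false) P ->
  hasNP (N ++ P).
Proof.
move=> hNe hP; elim: N hNe => [|n N IH] // _ hN0 hPs.
move: hN0 => /= /andP [/eqP hn hN].
case: N IH hN => [|n2 N] IH hN.
  by clear IH; case: P hP hPs => [|p P] //= _ /andP [/eqP -> _]; rewrite hn.
by move: (IH isT hN hPs) => /= h; rewrite /= h orbT.
Qed.

Lemma main_ind (d : nat) (hd : 3 <= d) (hodd : odd d) n :
  forall w : word d, size w <= n -> represents_identity w -> forall j, exp_sum w j = 0%R.
Proof.
elim: n => [|n IHn] w.
  by case: w.
have IH : IHP d n.+1 by move=> u hu; apply: IHn.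
move=> hs hid.
case hnp: (hasNP w); first exact: (caseNP hd hodd IH hs hid hnp).
have [P [N [E hP hN]]] := split_noNP (negbT hnp).
case: (eqVneq P [::]) => [EP|nP].
  case: (eqVneq N [::]) => [EN|nN]; first by rewrite E EP EN.
  by exfalso; apply: (ss_false hd IH hs hid (b := true)) => //; rewrite E EP.
case: (eqVneq N [::]) => [EN|nN].
  by exfalso; apply: (ss_false hd IH hs hid (b := false)) => //; rewrite E EN cats0.
have hid' : represents_identity (N ++ P) by apply: rot_id => //; rewrite -E.
have hs' : size (N ++ P) <= n.+1 by rewrite size_cat addnC -size_cat -E.
move=> j; rewrite E es_cat addrC -es_cat.
exact: (caseNP hd hodd IH hs' hid' (hasNP_cat nN nP hN hP)).
Qed.

Theorem theorem4p1 (d : nat) (hd : 3 <= d) (hodd : odd d) (w : word d) :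
  represents_identity w -> forall i : 'I_d, exp_sum w i = 0%R.
Proof. move=> hid; exact: (main_ind hd hodd (leqnn _) hid). Qed.
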